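(* Let $f:\mathbb R^n\to\mathbb R$ be continuously differentiable, and let $\{x^k\}$ be generated by a linesearch method $x^{k+1}=x^k+t_kd^k$ ($k\in\mathbb N$) with stepsizes $t_k\ge 0$ and directions $d^k\in\mathbb R^n$ such that: (a) $\{d^k\}$ is gradient associated with $\{x^k\}$; (b) $0$ is an accumulation point of $\{d^k\}$; (c) $\sum_{k=1}^\infty t_k\|d^k\|^2<\infty$. Then every accumulation point of $\{x^k\}$ is a stationary point of $f$ (i.e. $\nabla f(\bar x)=0$). Moreover, if $\{t_k\}$ is bounded from above, then: (i) if $\{x^k\}$ is bounded, the set of accumulation points of $\{x^k\}$ is nonempty, compact, and connected; (ii) if $\{x^k\}$ has an isolated accumulation point, then the whole sequence $\{x^k\}$ converges to it.
   Context: A direction sequence $\{d^k\}$ is called gradient associated with $\{x^k\}$ if for every infinite set $J\subset\mathbb N$, $d^k\to0$ as $k\to\infty,\ k\in J$ implies $\nabla f(x^k)\to 0$ as $k\to\infty,\ k\in J$. *)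

(* Defs.v *)
From HB Require Import structures.
From mathcomp Require Import all_boot all_order all_algebra.
From mathcomp Require Import all_classical all_reals all_analysis.
Set Implicit Arguments. Unset Strict Implicit. Unset Printing Implicit Defensive.
Import Order.TTheory GRing.Theory Num.Theory.
Import numFieldNormedType.Exports.
Local Open Scope classical_set_scope.
Local Open Scope ring_scope.

Definition grad (R : realType) (n : nat) (f : 'rV[R]_n -> R) (x : 'rV[R]_n)
  : 'rV[R]_n := \row_(i < n) ('d f x (delta_mx 0 i)).

Definition C1 (R : realType) (n : nat) (f : 'rV[R]_n -> R) : Prop :=
  (forall x, differentiable f x) /\ continuous (grad f).

Definition sqnorm (R : realType) (n : nat) (v : 'rV[R]_n) : R :=
  \sum_(i < n) v ord0 i ^+ 2.

Definition acc_pt (T : topologicalType) (u : nat -> T) (p : T) : Prop :=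
  cluster (u @ \oo) p.

Definition grad_assoc (R : realType) (n : nat) (f : 'rV[R]_n -> R)
  (x d : nat -> 'rV[R]_n) : Prop :=
  forall J : set nat, infinite_set J ->
    d @ (within J \oo) --> (0 : 'rV[R]_n) ->
    (fun k => grad f (x k)) @ (within J \oo) --> (0 : 'rV[R]_n).

(* Main.v *)
Require Import Defs.
From HB Require Import structures.
From mathcomp Require Import all_boot all_order all_algebra.
From mathcomp Require Import all_classical all_reals all_analysis.
From mathcomp Require Import ring lra.
Import Order.TTheory GRing.Theory Num.Theory.
Import numFieldNormedType.Exports.
Local Open Scope classical_set_scope.
Local Open Scope ring_scope.

Section S.
Variables (R : realType) (n : nat).
Implicit Types (x : nat -> 'rV[R]_n) (p : 'rV[R]_n).

Lemma nbhs_norm (p : 'rV[R]_n) (e : R) : 0 < e -> nbhs p [set y | `|y - p| < e].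
Proof.
move=> e0; apply/nbhs_ballP; exists e => // y; rewrite -ball_normE /= distrC //.
Qed.

Lemma acc_ptP x p : acc_pt x p <->
  (forall e : R, 0 < e -> forall N, exists k, (N <= k)%N /\ `|x k - p| < e).
Proof.
split.
  move=> H e e0 N.
  have [y [[k [Nk yk]] b]] := H [set y | exists k, (N <= k)%N /\ y = x k]
     _ (ltac:(by exists N => // k /= Nk; exists k)) (@nbhs_norm p e e0).
  by exists k; split => //; rewrite -yk.
move=> H A B [N _ HN] /nbhs_ballP [e e0 Be].
have [k [Nk xk]] := H e e0 N.
exists (x k); split; first exact: HN.
by apply: Be; rewrite -ball_normE /= distrC.
Qed.
Lemma bw x (S : set 'rV[R]_n) : compact S ->
  (forall N, exists k, (N <= k)%N /\ S (x k)) -> exists p, S p /\ acc_pt x p.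
Proof.
move=> cS H.
pose F := x @ within [set k | S (x k)] \oo.
have PF : ProperFilter F.
  apply: Build_ProperFilter.
  case=> N _ HN; have [k [Nk Sk]] := H N; exact: (HN k Nk Sk).
have FS : F S by exists 0%N => // k _ /=.
have [p [Sp cp]] := cS F PF FS.
exists p; split => //; apply/acc_ptP => e e0 N.
have [y [[k [Nk yk]] b]] := cp [set y | exists k, (N <= k)%N /\ y = x k]
     _ (ltac:(by exists N => // k /= Nk _; exists k)) (@nbhs_norm p e e0).
by exists k; split => //; rewrite -yk.
Qed.
End S.

Fixpoint gseq (F : nat -> nat -> nat) (m : nat) : nat :=
  if m is m'.+1 then F m (gseq F m').+1 else F 0%N 0%N.

Lemma gseq_mono (F : nat -> nat -> nat) : (forall m N, (N <= F m N)%N) ->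
  forall m d, (gseq F m < gseq F (m + d).+1)%N.
Proof.
move=> HF m d; elim: d => [|d IH]; first by rewrite addn0 /=; apply: HF.
apply: (ltn_trans IH); rewrite addnS /=; apply: HF.
Qed.

Lemma gseq_ge (F : nat -> nat -> nat) : (forall m N, (N <= F m N)%N) ->
  forall m, (m <= gseq F m)%N.
Proof.
move=> HF; elim => [|m IH] //=; apply: leq_trans (HF _ _); by rewrite ltnS.
Qed.

Lemma extract (R : realType) (P : nat -> Prop) (u : nat -> R) :
 (forall e, 0 < e -> forall N, exists k, (N <= k)%N /\ P k /\ u k < e) ->
 exists J : set nat, J `<=` P /\ (forall N, exists k, (N <= k)%N /\ J k) /\
   (forall e, 0 < e -> exists N, forall k, (N <= k)%N -> J k -> u k < e).
Proof.
move=> H.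
have H2 : forall mN : nat * nat, exists k, (mN.2 <= k)%N /\ P k /\ u k < mN.1.+1%:R^-1.
  by move=> [m N]; apply: H.
have [F0 HF0] := choice H2.
pose F m N := F0 (m, N).
have HF : forall m N, (N <= F m N)%N by move=> m N; have [] := HF0 (m, N).
have HG : forall m, P (gseq F m) /\ u (gseq F m) < m.+1%:R^-1.
  case => [|m] /=; first by have [_ []] := HF0 (0%N, 0%N).
  by have [_ []] := HF0 (m.+1, (gseq F m).+1).
exists (range (gseq F)); split; [|split].
- by move=> k [m _ <-]; case: (HG m).
- by move=> N; exists (gseq F N); split; [exact: (@gseq_ge F HF)|exists N].
move=> e e0.
have [M _ HM] := near_infty_natSinv_lt (PosNum e0).
exists (gseq F M) => k Mk [m _ gm].
have mM : (M <= m)%N.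
  rewrite leqNgt; apply/negP => mM.
  have := @gseq_mono F HF m (M - m.+1)%N; rewrite -addSn subnKC // gm.
  by rewrite ltnNge Mk.
have uk : u k < m.+1%:R^-1.
  by rewrite -gm; case: (HG m).
apply: lt_trans uk _; apply: le_lt_trans (HM M (leqnn M)).
rewrite lef_pV2 ?posrE ?ltr0n // ler_nat; by [].
Qed.

Lemma unbounded_infinite (J : set nat) :
  (forall N, exists k, (N <= k)%N /\ J k) -> infinite_set J.
Proof.
move=> H /finite_fsetP [X eX].
have [k [Nk Jk]] := H (\max_(i <- finmap.enum_fset X) i).+1.
have kX : k \in finmap.enum_fset X by move: Jk; rewrite eX.
have := leq_bigmax_seq (F := id) (P := xpredT) k kX erefl.
by rewrite leqNgt Nk.
Qed.

Lemma norm_sq (R : realType) (n : nat) (v : 'rV[R]_n) : `|v| * `|v| <= sqnorm v.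
Proof.
have S0 : 0 <= sqnorm v by apply: sumr_ge0 => i _; exact: sqr_ge0.
have H : `|v| <= Num.sqrt (sqnorm v).
  rewrite [X in X <= _]mx_normrE; apply: bigmax_le; first exact: sqrtr_ge0.
  move=> [i j] _ /=; rewrite (ord1 i) -sqrtr_sqr ler_sqrt //.
  rewrite /sqnorm (bigD1 j) //= lerDl; apply: sumr_ge0 => k _; exact: sqr_ge0.
apply: le_trans (_ : Num.sqrt (sqnorm v) * Num.sqrt (sqnorm v) <= _).
  by apply: ler_pM.
by rewrite -expr2 sqr_sqrtr.
Qed.

Lemma tail (R : realType) (a : nat -> R) : (forall k, 0 <= a k) -> cvgn (series a) ->
  forall e, 0 < e -> exists N, forall m m', (N <= m)%N -> \sum_(m <= k < m') a k < e.
Proof.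
move=> a0 ca e e0.
have := ca; move/cvgrPdist_lt => /(_ e e0) [N _ HN].
exists N => m m' Nm.
case: (leqP m m') => mm'; last by rewrite big_geq ?(ltnW mm').
have := sub_series a m m'; rewrite mm' => <-.
have le1 : series a m' <= limn (series a).
  apply: nondecreasing_cvgn_le => //.
  by move=> i j ij; apply: nondecreasing_series => // k _ _; exact: a0.
apply: le_lt_trans (HN m Nm); apply: le_trans (ler_norm _).
by rewrite lerD2r.
Qed.

Lemma telescope_norm (R : realType) (n : nat) (x : nat -> 'rV[R]_n) m j :
  (m <= j)%N -> `|x j - x m| <= \sum_(m <= k < j) `|x k.+1 - x k|.
Proof.
elim: j => [|j IH].
  by rewrite leqn0 => /eqP ->; rewrite subrr normr0 big_geq.
rewrite leq_eqVlt => /orP [/eqP ->|mj]; first by rewrite subrr normr0 big_geq.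
rewrite big_nat_recr //=; have := IH mj.
have -> : x j.+1 - x m = (x j.+1 - x j) + (x j - x m) by rewrite addrA subrK.
move=> h; apply: le_trans (ler_normD _ _) _; rewrite addrC; exact: lerD.
Qed.

Lemma run (P Q : nat -> Prop) : (forall N, exists k, (N <= k)%N /\ Q k) ->
  (forall k, Q k -> P k) -> (forall N, exists k, (N <= k)%N /\ ~ P k) ->
  forall N, exists m j, [/\ (N <= m)%N, (m <= j)%N, Q m,
     (forall k, (m <= k < j)%N -> P k) & ~ P j].
Proof.
move=> HQ QP HP N.
have [m [Nm Qm]] := HQ N.
have [[j [mj Hk nPj]]|nE] := pselect (exists j, [/\ (m <= j)%N,
     (forall k, (m <= k < j)%N -> P k) & ~ P j]).
  by exists m, j.
exfalso.
have all : forall i k, (m <= k <= m + i)%N -> P k.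
  elim => [|i IH] k.
    by rewrite addn0 -eqn_leq => /eqP <-; exact: QP.
  move=> /andP [mk]; rewrite leq_eqVlt => /orP [/eqP ->|ki].
    have [//|nP] := pselect (P (m + i.+1)%N).
    exfalso; apply: nE; exists (m + i.+1)%N; split => //; first exact: leq_addr.
    by move=> k' /andP [mk' k'i]; apply: IH; rewrite mk' -ltnS -addnS.
  by apply: IH; rewrite mk -ltnS -addnS.
have [j [mj nPj]] := HP m; apply: nPj; apply: (all (j - m)%N).
by rewrite (subnKC mj) mj leqnn.
Qed.


Lemma cvg0_within (R : realType) (n : nat) (J : set nat) (v : nat -> 'rV[R]_n) :
  (forall e, 0 < e -> exists N, forall k, (N <= k)%N -> J k -> `|v k| < e) ->
  v @ within J \oo --> (0 : 'rV[R]_n).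
Proof.
move=> H; apply/cvgrPdist_lt => e e0; have [N HN] := H e e0.
by exists N => // k /= Nk Jk; rewrite sub0r normrN; exact: HN.
Qed.

Lemma within_small (R : realType) (n : nat) (J : set nat) (v : nat -> 'rV[R]_n) :
  v @ within J \oo --> (0 : 'rV[R]_n) ->
  forall e, 0 < e -> exists N, forall k, (N <= k)%N -> J k -> `|v k| < e.
Proof.
move/cvgrPdist_lt => H e e0; have [N _ HN] := H e e0.
by exists N => k Nk Jk; have := HN k Nk Jk; rewrite sub0r normrN.
Qed.

Lemma away (R : realType) (V : pseudoMetricNormedZmodType R) (a b : V) (c : R) :
  `|a - b| < c -> `|a| = c + c -> c < `|b|.
Proof.
move=> h cc; have h2 : `|a| <= `|a - b| + `|b|.
  by rewrite -[X in `|X| <= _](subrK b) ler_normD.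
lra.
Qed.

Lemma part1 (R : realType) (n : nat) (f : 'rV[R]_n -> R)
  (x d : nat -> 'rV[R]_n) (t : nat -> R) :
  C1 f ->
  (forall k, 0 <= t k) ->
  (forall k, x k.+1 = x k + t k *: d k) ->
  grad_assoc f x d ->
  acc_pt d 0 ->
  cvgn (series (fun k => t k * sqnorm (d k))) ->
  (forall xb, acc_pt x xb -> grad f xb = 0).
Proof.
move=> [_ cg] t0 xS ga ad cs xb axb.
have [//|gne] := eqVneq (grad f xb) 0; exfalso.
set c := `|grad f xb| / 2.
have c0 : 0 < c by rewrite divr_gt0 // normr_gt0.
have cc : `|grad f xb| = c + c by rewrite /c -splitr.
clearbody c.
have [e e0 gb] : exists2 e, 0 < e & forall y, `|y - xb| < e -> c < `|grad f y|.
  have := cg xb. move/cvgrPdist_lt => /(_ c c0) /nbhs_ballP [e e0 He].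
  exists e => // y ye; have := He y. rewrite -ball_normE /=.
  move=> /(_ (ltac:(by rewrite distrC))) h.
  exact: (@away _ _ _ _ _ h cc).
have [dl [dl0 [N0 HN0]]] : exists dl, 0 < dl /\ exists N0, forall k, (N0 <= k)%N ->
    `|x k - xb| < e -> dl <= `|d k|.
  apply: contrapT => nE.
  have [J [JP [Jun Jcv]]] := @extract R (fun k => `|x k - xb| < e) (fun k => `|d k|)
    (ltac:(move=> e' e'0 N; apply: contrapT => H; apply: nE; exists e'; split => //;
      exists N => k Nk Pk; rewrite leNgt; apply/negP => dk; apply: H; by exists k)).
  have := ga J (@unbounded_infinite J Jun) (@cvg0_within R n J d Jcv).
  move/(@within_small R n J _) => /(_ c c0) [N HN].
  have [k [Nk Jk]] := Jun N.
  have h1 := HN k Nk Jk; have h2 := gb _ (JP k Jk).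
  by have := lt_trans h1 h2; rewrite ltxx.
have far : forall N, exists k, (N <= k)%N /\ ~ (`|x k - xb| < e).
  have [J [_ [Jun Jcv]]] := @extract R (fun k => True) (fun k => `|d k|)
    (ltac:(move=> e' e'0 N; have [k [Nk dk]] := (iffLR (@acc_ptP R n d 0) ad) e' e'0 N;
      by exists k; split => //; split => //; rewrite subr0 in dk)).
  have := ga J (@unbounded_infinite J Jun) (@cvg0_within R n J d Jcv).
  move/(@within_small R n J _) => /(_ c c0) [N1 HN1] N.
  have [k [Nk Jk]] := Jun (maxn N N1).
  exists k; split; first by apply: leq_trans Nk; exact: leq_maxl.
  move=> /gb h; have h1 := HN1 k (leq_trans (leq_maxr _ _) Nk) Jk.
  by have := lt_trans h1 h; rewrite ltxx.
have e20 : 0 < e / 2 by rewrite divr_gt0.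
have nr : forall N, exists k, (N <= k)%N /\ `|x k - xb| < e / 2.
  by move=> N; have := (iffLR (@acc_ptP R n x xb) axb) (e / 2) e20 N.
have a0 : forall k, 0 <= t k * sqnorm (d k).
  by move=> k; apply: mulr_ge0 => //; apply: sumr_ge0 => i _; exact: sqr_ge0.
have [N1 HN1] := @tail R _ a0 cs _ (mulr_gt0 dl0 e20).
have e2e : e / 2 < e by rewrite ltr_pdivrMr // ltr_pMr // ltr1n.
have [m [j [Nm mj Qm Pk nPj]]] := @run (fun k => `|x k - xb| < e) (fun k => `|x k - xb| < e / 2) nr
  (fun k (h : `|x k - xb| < e / 2) => lt_trans h e2e) far (maxn N0 N1).
have hsum := HN1 m j (leq_trans (leq_maxr _ _) Nm).
have step : forall k, (m <= k < j)%N -> dl * `|x k.+1 - x k| <= t k * sqnorm (d k).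
  move=> k /andP [mk kj].
  have dk : dl <= `|d k|.
    apply: HN0; last by apply: Pk; rewrite mk kj.
    exact: leq_trans (leq_maxl _ _) (leq_trans Nm mk).
  have -> : x k.+1 - x k = t k *: d k by rewrite xS addrC addKr.
  rewrite normrZ ger0_norm // mulrCA; apply: le_trans (_ : t k * (`|d k| * `|d k|) <= _).
    by apply: ler_wpM2l => //; apply: ler_wpM2r.
  by apply: ler_wpM2l => //; exact: norm_sq.
have s1 : dl * \sum_(m <= k < j) `|x k.+1 - x k| <= \sum_(m <= k < j) t k * sqnorm (d k).
  by rewrite mulr_sumr; apply: ler_sum_nat.
have s2 : `|x j - x m| <= \sum_(m <= k < j) `|x k.+1 - x k| := @telescope_norm R n x m j mj.
have s3 : `|x j - xb| <= `|x j - x m| + `|x m - xb|.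
  have -> : x j - xb = (x j - x m) + (x m - xb) by rewrite addrA subrK.
  exact: ler_normD.
have s4 : e <= `|x j - xb| by rewrite leNgt; apply/negP.
have s5 : e / 2 <= `|x j - x m|.
  have : e / 2 + e / 2 <= `|x j - x m| + e / 2.
    rewrite -splitr; apply: le_trans s4 _; apply: le_trans s3 _; rewrite lerD2l; exact: ltW.
  by rewrite lerD2r.
have s6 : dl * (e / 2) <= dl * \sum_(m <= k < j) `|x k.+1 - x k|.
  by apply: ler_wpM2l; [exact: ltW | exact: le_trans s5 s2].
by have := le_lt_trans (le_trans s6 s1) hsum; rewrite ltxx.
Qed.

Section S2.
Variables (R : realType) (n : nat).
Implicit Types (x : nat -> 'rV[R]_n) (p : 'rV[R]_n).

Lemma bwJ x (J : nat -> Prop) (S : set 'rV[R]_n) : compact S ->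
  (forall N, exists k, (N <= k)%N /\ J k /\ S (x k)) ->
  exists p, S p /\ (forall e, 0 < e -> forall N, exists k, (N <= k)%N /\ J k /\ `|x k - p| < e).
Proof.
move=> cS H.
pose F := x @ within [set k | J k /\ S (x k)] \oo.
have PF : ProperFilter F.
  apply: Build_ProperFilter.
  case=> N _ HN; have [k [Nk Sk]] := H N; exact: (HN k Nk Sk).
have FS : F S by exists 0%N => // k _ [].
have [p [Sp cp]] := cS F PF FS.
exists p; split => // e e0 N.
have [y [[k [Nk [Jk yk]]] b]] := cp [set y | exists k, (N <= k)%N /\ J k /\ y = x k]
     _ (ltac:(by exists N => // k /= Nk [Jk _]; exists k)) (@nbhs_norm R n p e e0).
by exists k; split => //; split => //; rewrite -yk.
Qed.

Lemma acc_closed x : closed (acc_pt x).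
Proof.
move=> p cp; apply/acc_ptP => e e0 N.
have e20 : 0 < e / 2 by rewrite divr_gt0.
have [q [aq qp]] := cp _ (@nbhs_norm R n p _ e20).
have [k [Nk xq]] := (iffLR (@acc_ptP R n x q) aq) _ e20 N.
exists k; split => //.
have -> : x k - p = (x k - q) + (q - p) by rewrite addrA subrK.
apply: le_lt_trans (ler_normD _ _) _.
by rewrite [e](splitr e); apply: ltrD.
Qed.

Lemma mkbounded (S : set 'rV[R]_n) (B : R) : (forall y, S y -> `|y| <= B) -> bounded_set S.
Proof.
move=> H; exists B; split; first exact: num_real.
move=> M BM y Sy; exact: le_trans (H y Sy) (ltW BM).
Qed.

Lemma cball_norm p (r : R) y : 0 < r -> closed_ball p r y -> `|y - p| <= r.
Proof. by move=> r0; rewrite closed_ballE // /closed_ball_ /= distrC. Qed.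

Lemma norm_cball p (r : R) y : 0 < r -> `|y - p| <= r -> closed_ball p r y.
Proof. by move=> r0; rewrite closed_ballE // /closed_ball_ /= distrC. Qed.

Lemma cball_compact p (r : R) : 0 < r -> compact (closed_ball p r).
Proof.
move=> r0; apply: bounded_closed_compact; last exact: closed_ball_closed.
apply: (@mkbounded _ (`|p| + r)) => y /(@cball_norm p r y r0) h.
have -> : y = (y - p) + p by rewrite subrK.
by apply: le_trans (ler_normD _ _) _; rewrite addrC lerD2l.
Qed.

Lemma steps x d (t : nat -> R) (M : R) : (forall k, 0 <= t k) -> (forall k, t k <= M) ->
  (forall k, x k.+1 = x k + t k *: d k) ->
  cvgn (series (fun k => t k * sqnorm (d k))) ->
  forall e, 0 < e -> exists N, forall k, (N <= k)%N -> `|x k.+1 - x k| < e.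
Proof.
move=> t0 tM xS cs e e0.
have M0 : 0 <= M by apply: le_trans (tM 0%N); exact: t0.
have a0 : forall k, 0 <= t k * sqnorm (d k).
  by move=> k; apply: mulr_ge0 => //; apply: sumr_ge0 => i _; exact: sqr_ge0.
have M10 : 0 < M + 1 by apply: ltr_wpDl.
have [N HN] := @tail R _ a0 cs (e * e / (M + 1)) (ltac:(by rewrite divr_gt0 // mulr_gt0)).
exists N => k Nk.
have hk := HN k k.+1 Nk; rewrite big_nat1 in hk.
have -> : x k.+1 - x k = t k *: d k by rewrite xS addrC addKr.
rewrite normrZ ger0_norm //.
move: hk; rewrite ltr_pdivlMr // => hk.
have key : forall D Q, 0 <= D -> D * D <= Q -> t k * Q * (M + 1) < e * e -> t k * D < e.
  move=> D Q D0 sq hk2.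
  have Q0 : 0 <= Q by apply: le_trans sq; exact: mulr_ge0.
  have h1 : (t k * D) * (t k * D) <= t k * Q * (M + 1).
    have -> : (t k * D) * (t k * D) = t k * (t k * (D * D)) by ring.
    apply: le_trans (_ : t k * (t k * Q) <= _).
      exact: (ler_wpM2l (t0 k) (ler_wpM2l (t0 k) sq)).
    have -> : t k * Q * (M + 1) = t k * (Q * (M + 1)) by ring.
    apply: (ler_wpM2l (t0 k)); rewrite [t k * Q]mulrC; apply: (ler_wpM2l Q0).
    by apply: le_trans (tM k) _; rewrite lerDl.
  have h2 := le_lt_trans h1 hk2.
  have tD0 : 0 <= t k * D by exact: mulr_ge0.
  rewrite ltNge; apply/negP => h3.
  have := ler_pM (ltW e0) (ltW e0) h3 h3.
  by rewrite leNgt h2.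
apply: key hk; [exact: normr_ge0 | exact: norm_sq].
Qed.

End S2.

Lemma part2ii (R : realType) (n : nat) (x d : nat -> 'rV[R]_n) (t : nat -> R) (M : R) :
  (forall k, 0 <= t k) -> (forall k, t k <= M) ->
  (forall k, x k.+1 = x k + t k *: d k) ->
  cvgn (series (fun k => t k * sqnorm (d k))) ->
  forall xb, acc_pt x xb ->
   (exists U, nbhs xb U /\ (forall y, U y -> acc_pt x y -> y = xb)) ->
   x @ \oo --> xb.
Proof.
move=> t0 tM xS cs xb axb [U [Ub iso]].
have [r r0 rU] := (iffLR (nbhs_ballP xb U)) Ub.
have key : forall η, 0 < η -> 3 * η <= r -> exists N, forall k, (N <= k)%N -> `|x k - xb| < η.
  move=> η η0 ηr; apply: contrapT => nE.
  have far : forall N, exists k, (N <= k)%N /\ ~ (`|x k - xb| < η).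
    move=> N; apply: contrapT => H; apply: nE; exists N => k Nk.
    by apply: contrapT => h; apply: H; exists k.
  have η20 : 0 < η / 2 by rewrite divr_gt0.
  have nr : forall N, exists k, (N <= k)%N /\ `|x k - xb| < η / 2.
    by move=> N; have := (iffLR (@acc_ptP R n x xb) axb) (η / 2) η20 N.
  have ηη : η / 2 < η by rewrite ltr_pdivrMr // ltr_pMr // ltr1n.
  have [N1 HN1] := @steps R n x d t M t0 tM xS cs _ η20.
  have η2 : 0 < 2 * η by rewrite mulr_gt0.
  pose S := closed_ball xb (2 * η) `&` ~` ball xb η.
  have cS : compact S.
    apply: (subclosed_compact _ (@cball_compact R n xb _ η2)); last by move=> y [].
    apply: closedI; first exact: closed_ball_closed.
    exact: open_closedC (ball_open _ _).
  have inS : forall N, exists k, (N <= k)%N /\ S (x k).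
    move=> N.
    have [m [j [Nm mj Qm Pk nPj]]] := @run (fun k => `|x k - xb| < η)
      (fun k => `|x k - xb| < η / 2) nr (fun k h => lt_trans h ηη) far (maxn N N1).
    case: j mj Pk nPj => [|i] mj Pk nPj.
      move: mj; rewrite leqn0 => /eqP mj; subst m; by case: nPj; exact: lt_trans Qm ηη.
    have mi : (m <= i)%N.
      rewrite leq_eqVlt in mj; case/orP: mj => [/eqP mj|//].
      subst m; by case: nPj; exact: lt_trans Qm ηη.
    have hi := Pk i (ltac:(by rewrite mi ltnSn)).
    have hs := HN1 i (leq_trans (leq_maxr _ _) (leq_trans Nm mi)).
    exists i.+1; split.
      by apply: leq_trans (leq_maxl N N1) (leq_trans Nm (leq_trans mi (leqnSn i))).
    split.
      apply: norm_cball => //.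
      have -> : x i.+1 - xb = (x i.+1 - x i) + (x i - xb) by rewrite addrA subrK.
      apply: le_trans (ler_normD _ _) _; rewrite mulr2n mulrDl mul1r.
      apply: ltW; apply: ltrD => //; exact: lt_trans hs ηη.
    by rewrite -ball_normE /= distrC.
  have [p [Sp ap]] := @bw R n x S cS inS.
  have pU : U p.
    apply: rU; rewrite -ball_normE /= distrC.
    case: Sp => /(@cball_norm R n xb (2 * η) p η2) h _; apply: le_lt_trans h _.
    apply: lt_le_trans ηr; rewrite ltr_pM2r // ltr_nat //.
  have pxb := iso p pU ap.
  case: Sp => _; rewrite pxb; apply; exact: ballxx.
apply/cvgrPdist_lt => e e0.
have r30 : 0 < r / 3 by rewrite divr_gt0.
have [N HN] := key (Num.min e (r / 3)) (ltac:(by rewrite lt_min e0 r30))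
  (ltac:(by rewrite -ler_pdivlMl ?ltr0n // ge_min mulrC lexx orbT)).
exists N => // k /= Nk; rewrite distrC; apply: lt_le_trans (HN k Nk) _.
by rewrite ge_min lexx.
Qed.

Lemma visits (R : realType) (n : nat) (x : nat -> 'rV[R]_n) (a : 'rV[R]_n) (V : set 'rV[R]_n) :
  acc_pt x a -> open V -> V a -> forall N, exists k, (N <= k)%N /\ V (x k).
Proof.
move=> aa oV Va N.
have [r r0 rV] := (iffLR (nbhs_ballP a V)) (open_nbhs_nbhs (conj oV Va)).
have [k [Nk xk]] := (iffLR (@acc_ptP R n x a) aa) r r0 N.
by exists k; split => //; apply: rV; rewrite -ball_normE /= distrC.
Qed.

Lemma part2i (R : realType) (n : nat) (x d : nat -> 'rV[R]_n) (t : nat -> R) (M : R) :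
  (forall k, 0 <= t k) -> (forall k, t k <= M) ->
  (forall k, x k.+1 = x k + t k *: d k) ->
  cvgn (series (fun k => t k * sqnorm (d k))) ->
  bounded_set (range x) ->
  acc_pt x !=set0 /\ compact (acc_pt x) /\ connected (acc_pt x).
Proof.
move=> t0 tM xS cs [B0 [B0r HB0]].
pose B := `|B0| + 1.
have B0B : B0 < B by apply: le_lt_trans (real_ler_norm B0r) _; rewrite ltrDl.
have B0' : 0 < B by apply: ltr_wpDl.
have bnd : forall k, `|x k| <= B by move=> k; apply: (HB0 B B0B); exists k.
pose K := closed_ball (0 : 'rV[R]_n) B.
have cK : compact K := @cball_compact R n 0 B B0'.
have xK : forall k, K (x k).
  by move=> k; apply: norm_cball => //; rewrite subr0.
have Abnd : forall p, acc_pt x p -> `|p| <= B.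
  move=> p ap; apply/ler_addgt0Pr => e e0.
  have [k [_ xk]] := (iffLR (@acc_ptP R n x p) ap) e e0 0%N.
  have -> : p = x k - (x k - p) by rewrite opprB addrC subrK.
  apply: le_trans (ler_normB _ _) _; apply: lerD; [exact: bnd|exact: ltW].
split.
  have [p [_ ap]] := @bw R n x K cK (fun N => ex_intro _ N (conj (leqnn N) (xK N))).
  by exists p.
split.
  apply: bounded_closed_compact; last exact: acc_closed.
  exact: (@mkbounded R n _ B).
apply: contrapT => /connectedPn [E [E0 AE [s1 s2]]].
set A := acc_pt x in AE.
have AEq : forall q, A q -> E false q \/ E true q by move=> q; rewrite AE.
have EA : forall b q, E b q -> A q by move=> [] q Eq; rewrite AE; [right|left].
have cE0 : closed (E false).
  move=> q cq.
  have Aq : A q by apply: (@acc_closed R n x); apply: (closureS _ cq) => z; exact: EA.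
  case: (AEq q Aq) => // E1q.
  by have : (closure (E false) `&` E true) q by []; rewrite s1.
have cE1 : closed (E true).
  move=> q cq.
  have Aq : A q by apply: (@acc_closed R n x); apply: (closureS _ cq) => z; exact: EA.
  case: (AEq q Aq) => // E1q.
  by have : (E false `&` closure (E true)) q by []; rewrite s2.
have dis : E false `&` E true = set0 by apply: separated_disjoint.
have [U0 [U1 [oU0 oU1 sU0 sU1 U01]]] :=
  (iffLR (@normal_openP R 'rV[R]_n)) (@pseudometric_normal R _) _ _ cE0 cE1 dis.
have AU : forall q, A q -> U0 q \/ U1 q.
  by move=> q /AEq [/sU0|/sU1]; [left|right].
have [N2 HN2] : exists N2, forall k, (N2 <= k)%N -> (U0 `|` U1) (x k).
  apply: contrapT => nE.
  pose W := K `&` ~` (U0 `|` U1).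
  have cW : compact W.
    apply: (subclosed_compact _ cK); last by move=> y [].
    apply: closedI; first exact: closed_ball_closed.
    exact: open_closedC (openU oU0 oU1).
  have inW : forall N, exists k, (N <= k)%N /\ W (x k).
    move=> N; apply: contrapT => H; apply: nE; exists N => k Nk.
    by apply: contrapT => h; apply: H; exists k; split => //; split.
  have [p [[_ Wp] ap]] := @bw R n x W cW inW.
  by apply: Wp; case: (AU p ap); [left|right].
have [a0 E0a] := E0 false.
have [a1 E1a] := E0 true.
have v0 := @visits R n x a0 U0 (EA _ _ E0a) oU0 (sU0 _ E0a).
have v1 := @visits R n x a1 U1 (EA _ _ E1a) oU1 (sU1 _ E1a).
have nU0 : forall N, exists k, (N <= k)%N /\ ~ U0 (x k).
  move=> N; have [k [Nk U1k]] := v1 N; exists k; split => // U0k.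
  by have : (U0 `&` U1) (x k) by []; rewrite U01.
have cross : forall N, exists k, (N <= k)%N /\ (U0 (x k) /\ U1 (x k.+1)).
  move=> N.
  have [m [j [Nm mj Qm Pk nPj]]] := @run (fun k => U0 (x k)) (fun k => U0 (x k))
     v0 (fun k h => h) nU0 (maxn N N2).
  case: j mj Pk nPj => [|i] mj Pk nPj.
    move: mj; rewrite leqn0 => /eqP mj; subst m; by case: nPj.
  have mi : (m <= i)%N.
    rewrite leq_eqVlt in mj; case/orP: mj => [/eqP mj|//].
    by subst m; case: nPj.
  exists i; split; first exact: leq_trans (leq_maxl N N2) (leq_trans Nm mi).
  split; first by apply: Pk; rewrite mi ltnSn.
  have := HN2 i.+1 (leq_trans (leq_maxr N N2) (leq_trans Nm (leq_trans mi (leqnSn i)))).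
  by case.
have [p [_ Hp]] := @bwJ R n x (fun k => U0 (x k) /\ U1 (x k.+1)) K cK
  (fun N => let: ex_intro k (conj Nk Jk) := cross N in ex_intro _ k (conj Nk (conj Jk (xK k)))).
have ap : A p.
  apply/acc_ptP => e e0 N; have [k [Nk [_ h]]] := Hp e e0 N; by exists k.
have key : forall V, open V -> V p -> exists k, U0 (x k) /\ U1 (x k.+1) /\ V (x k) /\ V (x k.+1).
  move=> V oV Vp.
  have [r r0 rV] := (iffLR (nbhs_ballP p V)) (open_nbhs_nbhs (conj oV Vp)).
  have r20 : 0 < r / 2 by rewrite divr_gt0.
  have [N3 HN3] := @steps R n x d t M t0 tM xS cs _ r20.
  have [k [Nk [[J0 J1] xk]]] := Hp _ r20 N3.
  have rr : r / 2 < r by rewrite ltr_pdivrMr // ltr_pMr // ltr1n.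
  exists k; split => //; split => //; split.
    by apply: rV; rewrite -ball_normE /= distrC; apply: lt_trans xk rr.
  apply: rV; rewrite -ball_normE /= distrC.
  have -> : x k.+1 - p = (x k.+1 - x k) + (x k - p) by rewrite addrA subrK.
  apply: le_lt_trans (ler_normD _ _) _; rewrite [r]splitr; apply: ltrD => //.
  exact: HN3.
case: (AU p ap) => [U0p|U1p].
  have [k [_ [U1k [_ U0k]]]] := key U0 oU0 U0p.
  by have : (U0 `&` U1) (x k.+1) by []; rewrite U01.
have [k [U0k [_ [U1k _]]]] := key U1 oU1 U1p.
by have : (U0 `&` U1) (x k) by []; rewrite U01.
Qed.

Theorem mainTheorem2 (R : realType) (n : nat) (f : 'rV[R]_n -> R)
  (x d : nat -> 'rV[R]_n) (t : nat -> R) :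
  C1 f ->
  (forall k, 0 <= t k) ->
  (forall k, x k.+1 = x k + t k *: d k) ->
  grad_assoc f x d ->
  acc_pt d 0 ->
  cvgn (series (fun k => t k * sqnorm (d k))) ->
  (forall xb, acc_pt x xb -> grad f xb = 0) /\
  ((exists M : R, forall k, t k <= M) ->
     (bounded_set (range x) ->
        acc_pt x !=set0 /\ compact (acc_pt x) /\ connected (acc_pt x)) /\
     (forall xb, acc_pt x xb ->
        (exists U, nbhs xb U /\ (forall y, U y -> acc_pt x y -> y = xb)) ->
        x @ \oo --> xb)).
Proof.
move=> C t0 xS ga ad cs; split; first exact: (@part1 R n f x d t C t0 xS ga ad cs).
move=> [M tM]; split.
  exact: (@part2i R n x d t M t0 tM xS cs).
exact: (@part2ii R n x d t M t0 tM xS cs).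
Qed.
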